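(* In the conditional setting described in the context, fix $\mathbf x\in\mathcal X$ and assume A1$''$, A2 and A3. Suppose there exist a fixed subset $\mathcal K^*\subseteq\{1,\dots,K\}$ and a constant $\delta>0$ such that $\inf_{\mathbf w\in\mathcal W^*}\sum_{k\in\mathcal K^*}w_k\ge\frac12+\delta$ and $$\limsup_{n\to\infty}\Pr\Big(\bigcup_{k\in\mathcal K^*}\{Y_{\mathbf x}\notin\mathcal C_k(\mathbf x;\mathcal D_n)\}\Big)\le\alpha.$$ Then $\liminf_{n\to\infty}\Pr\big(Y_{\mathbf x}\in\mathcal C_{\mathrm{comb}}(\mathbf x;\mathcal D_n)\big)\ge1-\alpha$.
   Context: Conditional setting: fix $K\ge2$ and $\alpha\in(0,1)$. For each $n$, on a common probability space there is a random data set $\mathcal D_n$. For each $k\in\{1,\dots,K\}$ and each $\mathbf x\in\mathcal X\subseteq\mathbb R^p$, $\mathcal C_k(\mathbf x;\mathcal D_n)\subseteq\mathbb R$ is a prediction set determined by $\mathcal D_n$ and $\mathbf x$. For a fixed test covariate value $\mathbf x$, $Y_{\mathbf x}$ denotes a real random variable distributed as the conditional law of the response given covariate $\mathbf x$, independent of $\mathcal D_n$; conditioning on $\{\mathbf X=\mathbf x\}$ means evaluating at $\mathbf x$ with response $Y_{\mathbf x}$. The events $\{Y_{\mathbf x}\in\mathcal C_k(\mathbf x;\mathcal D_n)\}$ are assumed measurable. Let $\Delta^{K-1}=\{\mathbf w\in[0,1]^K:w_k\ge0,\sum_k w_k=1\}$, let $\widehat{\mathbf w}_n=(\widehat w_{n,1},\dots,\widehat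 w_{n,K})$ be a $\sigma(\mathcal D_n)$-measurable random vector in $\Delta^{K-1}$, and let $\mathcal W^*\subseteq\Delta^{K-1}$ be a nonempty closed convex set; $\|\cdot\|$ is the Euclidean norm. A1$''$: $\sup_{k\in\{1,\dots,K\}}\big|\Pr(Y_{\mathbf x}\notin\mathcal C_k(\mathbf x;\mathcal D_n)\mid\mathcal D_n)-\alpha\big|\to0$ in probability as $n\to\infty$. A2: $\inf_{\mathbf w\in\mathcal W^*}\|\widehat{\mathbf w}_n-\mathbf w\|\to0$ in probability as $n\to\infty$. A3: $\mathcal C_{\mathrm{comb}}(\mathbf x;\mathcal D_n):=\{y\in\mathbb R:\sum_{k=1}^K\widehat w_{n,k}\mathbf 1\{y\in\mathcal C_k(\mathbf x;\mathcal D_n)\}>1/2\}$. *)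

(* Defs.v *)
From HB Require Import structures.
From mathcomp Require Import all_boot all_order all_algebra.
From mathcomp Require Import all_classical all_reals all_analysis.
Set Implicit Arguments. Unset Strict Implicit. Unset Printing Implicit Defensive.
Import Order.TTheory GRing.Theory Num.Theory.
Import numFieldNormedType.Exports.
Local Open Scope classical_set_scope.
Local Open Scope ring_scope.

Definition simplex (R : realType) (K : nat) : set ('rV[R]_K) :=
  [set w | (forall k, 0 <= w ord0 k) /\ \sum_(k < K) w ord0 k = 1].

Definition eucl_norm (R : realType) (K : nat) (w : 'rV[R]_K) : R :=
  Num.sqrt (\sum_(k < K) (w ord0 k) ^+ 2).

Definition dist_to (R : realType) (K : nat) (W : set ('rV[R]_K)) (v : 'rV[R]_K) : R :=
  inf [set eucl_norm (v - w) | w in W].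

Definition cvg_in_prob0 d (T : measurableType d) (R : realType)
    (P : probability T R) (X : nat -> T -> R) : Prop :=
  forall eps : R, 0 < eps ->
    (fun n => P [set om | eps <= `|X n om|]) @ \oo --> 0%E.

Definition C_comb (R : realType) (K : nat) (w : 'rV[R]_K) (C : 'I_K -> set R) : set R :=
  [set y | 1 / 2 < \sum_(k < K) w ord0 k * \1_(C k) y].

(* Main.v *)
Require Import Defs.
From HB Require Import structures.
From mathcomp Require Import all_boot all_order all_algebra.
From mathcomp Require Import all_classical all_reals all_analysis.
From mathcomp Require Import measurable_realfun ring lra.
Import Order.TTheory GRing.Theory Num.Theory.
Import numFieldNormedType.Exports.
Local Open Scope classical_set_scope.
Local Open Scope ring_scope.

Section Norm.
Variables (R : realType) (K : nat).
Implicit Types (v a b : 'rV[R]_K).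

Lemma en_ge0 v : 0 <= eucl_norm v.
Proof. exact: sqrtr_ge0. Qed.

Lemma enN v : eucl_norm (- v) = eucl_norm v.
Proof. by rewrite /eucl_norm; congr Num.sqrt; apply: eq_bigr => k _; rewrite mxE sqrrN. Qed.

Lemma en_sq v : eucl_norm v ^+ 2 = \sum_(k < K) (v ord0 k) ^+ 2.
Proof. by rewrite /eucl_norm sqr_sqrtr // sumr_ge0 // => k _; rewrite sqr_ge0. Qed.

Lemma en_coord v k : `|v ord0 k| <= eucl_norm v.
Proof.
rewrite -sqrtr_sqr /eucl_norm ler_sqrt; last by rewrite sumr_ge0 // => i _; rewrite sqr_ge0.
rewrite (bigD1 k) //= lerDl sumr_ge0 // => i _; exact: sqr_ge0.
Qed.

Lemma sqrt_le_of (x y : R) : 0 <= y -> x <= y ^+ 2 -> Num.sqrt x <= y.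
Proof.
move=> y0 xy; have [x0|x0] := leP 0 x.
  by rewrite -(ger0_norm y0) -sqrtr_sqr ler_sqrt // sqr_ge0.
by rewrite ltr0_sqrtr.
Qed.

Lemma en_le v t : 0 <= t -> (forall k, `|v ord0 k| <= t) -> eucl_norm v <= t * K%:R.
Proof.
move=> t0 H; apply: sqrt_le_of; first by rewrite mulr_ge0.
apply: (@le_trans _ _ (\sum_(k < K) t ^+ 2)).
  apply: ler_sum => k _; rewrite -real_normK ?num_real //.
  by rewrite lerXn2r ?nnegrE ?normr_ge0.
rewrite sumr_const card_ord exprMn.
have hK : (K%:R : R) <= K%:R ^+ 2.
  case: K => [|n]; first by rewrite expr0n.
  by rewrite expr2 ler_peMl // ?ler1n // ler0n.
have hK0 : (0 : R) <= K%:R by rewrite ler0n.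
have ht : 0 <= t ^+ 2 by rewrite sqr_ge0.
rewrite ?mul1r -[_ *+ K]mulr_natr. exact: ler_wpM2l.
Qed.

Lemma en_lt v r : 0 < r -> (eucl_norm v < r) = (\sum_(k < K) v ord0 k ^+ 2 < r ^+ 2).
Proof.
move=> r0; rewrite /eucl_norm -{1}(ger0_norm (ltW r0)) -sqrtr_sqr ltr_sqrt //.
exact: exprn_gt0.
Qed.

Lemma CS a b : (\sum_(k < K) a ord0 k * b ord0 k) ^+ 2 <=
  (\sum_(k < K) a ord0 k ^+ 2) * (\sum_(k < K) b ord0 k ^+ 2).
Proof.
set A := \sum_(k < K) a ord0 k ^+ 2; set B := \sum_(k < K) b ord0 k ^+ 2.
set S := \sum_(k < K) a ord0 k * b ord0 k.
have B0 : 0 <= B by rewrite sumr_ge0 // => k _; rewrite sqr_ge0.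
have key : 0 <= \sum_(k < K) (B * a ord0 k - S * b ord0 k) ^+ 2.
  by rewrite sumr_ge0 // => k _; rewrite sqr_ge0.
have E : \sum_(k < K) (B * a ord0 k - S * b ord0 k) ^+ 2 = B * (B * A - S ^+ 2).
  have e : forall k, (B * a ord0 k - S * b ord0 k) ^+ 2 =
     B ^+ 2 * a ord0 k ^+ 2 - (2 * B * S) * (a ord0 k * b ord0 k) + S ^+ 2 * b ord0 k ^+ 2.
    by move=> k; ring.
  under eq_bigr => k _ do rewrite e.
  rewrite big_split /= sumrB -!mulr_sumr -/A -/B -/S; ring.
rewrite E in key.
have [Bz|Bp] := eqVneq B 0.
  have bz : forall k, b ord0 k = 0.
    move=> k; apply/eqP; rewrite -sqrf_eq0; apply/eqP.
    apply: (@psumr_eq0P R _ xpredT (fun i => b ord0 i ^+ 2)) => //.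
    by move=> i _; rewrite sqr_ge0.
  rewrite /S big1 ?expr0n ?mulr_ge0 // ?B0 ?sumr_ge0 // => k _; rewrite ?bz ?mulr0 ?sqr_ge0 //.
have Bpos : 0 < B by rewrite lt_def Bp B0.
by rewrite -subr_ge0 mulrC; move: key; rewrite pmulr_rge0.
Qed.

Lemma en_tri a b : eucl_norm (a + b) <= eucl_norm a + eucl_norm b.
Proof.
apply: sqrt_le_of; first by rewrite addr_ge0 ?en_ge0.
set A := \sum_(k < K) a ord0 k ^+ 2; set B := \sum_(k < K) b ord0 k ^+ 2.
set S := \sum_(k < K) a ord0 k * b ord0 k.
have A0 : 0 <= A by rewrite sumr_ge0 // => k _; rewrite sqr_ge0.
have B0 : 0 <= B by rewrite sumr_ge0 // => k _; rewrite sqr_ge0.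
have -> : \sum_(k < K) (a + b) ord0 k ^+ 2 = A + S *+ 2 + B.
  rewrite (eq_bigr (fun k => a ord0 k ^+ 2 + a ord0 k * b ord0 k *+ 2 + b ord0 k ^+ 2)).
    by rewrite !big_split /= mulr2n.
  by move=> k _; rewrite mxE sqrrD.
have hS : S <= eucl_norm a * eucl_norm b.
  rewrite /eucl_norm -sqrtrM // (le_trans (ler_norm S)) // -sqrtr_sqr ler_sqrt.
    exact: CS.
  exact: mulr_ge0.
rewrite sqrrD -/(eucl_norm a) -/(eucl_norm b) !en_sq -/A -/B.
by rewrite lerD2r lerD2l lerMn2r.
Qed.
End Norm.

Section Dist.
Variables (R : realType) (K : nat) (W : set 'rV[R]_K).
Hypothesis hW : W !=set0.

Lemma dist_lb v w : W w -> dist_to W v <= eucl_norm (v - w).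
Proof.
move=> Ww; apply: ge_inf; last by exists w.
by exists 0 => _ [u _ <-]; exact: en_ge0.
Qed.

Lemma dist_ge0 v : 0 <= dist_to W v.
Proof.
apply: lb_le_inf; first by case: hW => w Ww; exists (eucl_norm (v - w)), w.
by move=> _ [u _ <-]; exact: en_ge0.
Qed.

Lemma dist_lt v e : dist_to W v < e -> exists2 w, W w & eucl_norm (v - w) < e.
Proof.
move=> /inf_lt [].
  by case: hW => w Ww; exists (eucl_norm (v - w)), w.
by move=> _ [w Ww <-] h; exists w.
Qed.

Lemma dist_lip v q : dist_to W v <= dist_to W q + eucl_norm (v - q).
Proof.
rewrite leNgt; apply/negP => H.
have : dist_to W q < dist_to W v - eucl_norm (v - q) by rewrite ltrBrDr.
move=> /dist_lt [w Ww hw].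
have := dist_lb v w Ww.
have -> : v - w = (v - q) + (q - w) by rewrite addrA subrK.
move=> h; have := le_trans h (@en_tri R K _ _).
by rewrite leNgt -ltrBrDl hw.
Qed.
End Dist.

Section Meas.
Variables (d : measure_display) (T : measurableType d) (R : realType) (K : nat).
Variables (f : T -> 'rV[R]_K)
  (hf : forall k, measurable_fun setT (fun om => f om ord0 k)).

Lemma meas_norm_lt (q : 'rV[R]_K) (r : R) : 0 < r ->
  measurable [set om | eucl_norm (f om - q) < r].
Proof.
move=> r0.
have -> : [set om | eucl_norm (f om - q) < r] =
  setT `&` (fun om => \sum_(k < K) (f om ord0 k - q ord0 k) ^+ 2) @^-1`
    `]-oo, r ^+ 2[%classic.
  apply/seteqP; split => om /=; rewrite en_lt // in_itv /=;
  have -> : \sum_(k < K) (f om - q) ord0 k ^+ 2 = \sum_(k < K) (f om ord0 k - q ord0 k) ^+ 2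
    by apply: eq_bigr => k _; rewrite !mxE.
    by [].
  by case.
have H : forall k, measurable_fun setT (fun om => (f om ord0 k - q ord0 k) ^+ 2).
  move=> k.
  have -> : (fun om => (f om ord0 k - q ord0 k) ^+ 2) =
     (fun om => f om ord0 k - q ord0 k) \* (fun om => f om ord0 k - q ord0 k).
    by apply/funext => om; rewrite /= expr2.
  by apply: measurable_funM; apply: measurable_funB => //; exact: measurable_cst.
have mg := @measurable_sum d T R setT 'I_K (index_enum 'I_K) (fun k om => (f om ord0 k - q ord0 k) ^+ 2) H.
exact: mg measurableT _ (measurable_itv _).
Qed.

Lemma meas_dist (W : set 'rV[R]_K) (hW : W !=set0) (eps : R) :
  measurable [set om | eps <= dist_to W (f om)].
Proof.
pose qR (i : 'rV[rat]_K * rat) : 'rV[R]_K := map_mx (@ratr R) i.1.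
pose rR (i : 'rV[rat]_K * rat) : R := @ratr R i.2.
pose F (i : 'rV[rat]_K * rat) := [set om | (0 < rR i /\
  dist_to W (qR i) < eps - rR i) /\ eucl_norm (f om - qR i) < rR i].
have mF : forall i, measurable (F i).
  move=> i.
  have [c|nc] := pselect (0 < rR i /\ dist_to W (qR i) < eps - rR i).
    have -> : F i = [set om | eucl_norm (f om - qR i) < rR i].
      by apply/seteqP; split => om /=; [case|split].
    exact: meas_norm_lt c.1.
  have -> : F i = set0 by apply/seteqP; split => om // [].
  exact: measurable0.
have -> : [set om | eps <= dist_to W (f om)] = ~` \bigcup_i F i.
  apply/seteqP; split => om /=.
  - move=> h [i _ [[r0 hq] hn]].
    have hl := @dist_lip R K W hW (f om) (qR i).
    have := le_lt_trans hl (ltrD hq hn); rewrite subrK => /lt_le_trans /(_ h).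
    by rewrite ltxx.
  - move=> hn; rewrite leNgt; apply/negP => hlt.
    set v := f om in hn hlt *; set s := eps - dist_to W v.
    have s0 : 0 < s by rewrite subr_gt0.
    have K0 : (0 : R) < K.+1%:R by rewrite ltr0n.
    set t := s / (3 * K.+1%:R).
    have t0 : 0 < t by rewrite divr_gt0 // mulr_gt0.
    have /choice [g hg] : forall k : 'I_K, exists q : rat,
        ratr q \in `]v ord0 k - t, v ord0 k + t[.
      move=> k; apply: rat_in_itvoo; lra.
    pose qm := \row_k g k : 'rV[rat]_K.
    have hq : eucl_norm (v - map_mx ratr qm) <= s / 3.
      apply: le_trans (@en_le R K _ t (ltW t0) _) _.
        move=> k; rewrite !mxE; have := hg k; rewrite in_itv /= => /andP [h1 h2].
        rewrite ler_distl; apply/andP; split; lra.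
      have -> : s / 3 = t * K.+1%:R.
        rewrite /t; field; rewrite ?pnatr_eq0 //.
      by rewrite ler_wpM2l ?(ltW t0) // ler_nat.
    have [r] : exists r : rat, ratr r \in `]s / 3, 2 * s / 3[ by apply: rat_in_itvoo; lra.
    rewrite in_itv /= => /andP [r1 r2].
    apply: hn; exists (qm, r) => //=; split; [split|].
    + lra.
    + have hl := @dist_lip R K W hW (map_mx ratr qm) v.
      rewrite -opprB enN in hl.
      have : dist_to W v + s = eps by rewrite /s addrC subrK.
      lra.
    + exact: le_lt_trans hq r1.
apply: measurableC.
exact: countable_bigcupT_measurable (countableP _) mF.
Qed.
End Meas.

Theorem theorem4 (d : measure_display) (T : measurableType d) (R : realType)
  (P : probability T R)                      (* law of the data sequence (D_n)_n *)
  (mu : probability (measurableTypeR R) R)   (* conditional law of Y given X = x *)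
  (K : nat) (alpha : R)
  (C : 'I_K -> nat -> T -> set R)            (* C k n om = C_k(x; D_n(om)) *)
  (w_hat : nat -> T -> 'rV[R]_K)
  (W_star : set ('rV[R]_K))
  (K_star : {set 'I_K}) (delta : R) :
  (2 <= K)%N ->
  0 < alpha < 1 ->
  (forall k n, measurable [set z : T * R | C k n z.1 z.2]) ->
  (forall n om, simplex (w_hat n om)) ->
  (forall n k, measurable_fun setT (fun om => w_hat n om ord0 k)) ->
  W_star !=set0 -> closed W_star -> convex_set W_star -> W_star `<=` simplex (K := K) ->
  (* A1'' *)
  cvg_in_prob0 P (fun n om =>
    \big[Order.max/0]_(k < K) `|fine (mu (~` C k n om)) - alpha|) ->
  (* A2 *)
  cvg_in_prob0 P (fun n om => dist_to W_star (w_hat n om)) ->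
  0 < delta ->
  inf [set \sum_(k in K_star) w ord0 k | w in W_star] >= 1 / 2 + delta ->
  (limn_esup (fun n => (P \x mu)%E
      [set z : T * R | exists2 k, k \in K_star & ~ C k n z.1 z.2]) <= alpha%:E)%E ->
  (limn_einf (fun n => (P \x mu)%E
      [set z : T * R | C_comb (w_hat n z.1) (fun k => C k n z.1) z.2])
     >= (1 - alpha)%:E)%E.

Proof.
move=> K2 alpha01 mC simp mw Wne Wcl Wcv Wsub A1 A2 d0 hinf hsup.
have K0 : (0 : R) < K%:R by rewrite ltr0n (leq_trans _ K2).
pose eps := delta / (2 * K%:R).
have eps0 : 0 < eps by rewrite divr_gt0 // mulr_gt0.
pose PM := (P \x mu)%E.
pose Bn n := [set om | eps <= dist_to W_star (w_hat n om)].
pose Un n := [set z : T * R | exists2 k, k \in K_star & ~ C k n z.1 z.2].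
pose Cm n := [set z : T * R | C_comb (w_hat n z.1) (fun k => C k n z.1) z.2].
have mB n : measurable (Bn n) by exact: (@meas_dist d T R K (w_hat n) (mw n) W_star Wne eps).
have mU n : measurable (Un n).
  pose G (k : 'I_K) := [set z : T * R | k \in K_star /\ ~ C k n z.1 z.2].
  have -> : Un n = \bigcup_k G k.
    apply/seteqP; split => z /=.
      by move=> [k hk hc]; exists k.
    by move=> [k _ [hk hc]]; exists k.
  apply: countable_bigcupT_measurable; first exact: countableP.
  move=> k; case: (boolP (k \in K_star)) => hk.
    have -> : G k = ~` [set z | C k n z.1 z.2].
      by apply/seteqP; split => z /=; [case|split].
    exact: measurableC (mC k n).
  have -> : G k = set0.
    by apply/seteqP; split => z // [] h; rewrite h in hk.
  exact: measurable0.
have mCm n : measurable (Cm n).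
  have eI : forall k (z : T * R),
      \1_(C k n z.1) z.2 = \1_([set z : T * R | C k n z.1 z.2]) z :> R.
    move=> k z; rewrite !indicE; congr (_%:R).
  pose h := fun z : T * R => \sum_(k < K) w_hat n z.1 ord0 k * \1_([set z : T * R | C k n z.1 z.2]) z.
  have -> : Cm n = setT `&` h @^-1` `]1/2, +oo[%classic.
    apply/seteqP; split => z /=.
    - rewrite /C_comb /= => hz; split => //; rewrite in_itv /= andbT /h.
      by under eq_bigr => k _ do rewrite -eI.
    - move=> [_]; rewrite in_itv /= andbT /h /C_comb /=.
      by under eq_bigr => k _ do rewrite -eI.
  have H : forall k, measurable_fun setT (fun z : T * R =>
      w_hat n z.1 ord0 k * \1_([set z : T * R | C k n z.1 z.2]) z).
    move=> k; apply: measurable_funM.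
      exact: (measurableT_comp (mw n k) measurable_fst).
    have hmC := mC k n. apply: measurable_indic. exact: hmC.
  have mg := @measurable_sum _ _ R setT 'I_K (index_enum 'I_K) _ H.
  exact: mg measurableT _ (measurable_itv _).
have incl n : [set: T * R] `<=` Cm n `|` (Un n `|` (Bn n `*` [set: R])).
  move=> [om y] _.
  have [hb|hb] := pselect (Bn n om); first by right; right.
  have [hu|hu] := pselect (Un n (om, y)); first by right; left.
  left.
  have hC : forall k, k \in K_star -> C k n om y.
    by move=> k hk; apply: contrapT => hc; apply: hu; exists k.
  have : dist_to W_star (w_hat n om) < eps by rewrite ltNge; apply/negP.
  move=> /(@dist_lt R K W_star Wne) [w Ww hw].
  set wh := w_hat n om in hw *.
  have hw1 : 1/2 + delta <= \sum_(k in K_star) w ord0 k.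
    apply: le_trans hinf _; apply: ge_inf; last by exists w.
    exists 0 => _ [u /Wsub [u0 _] <-]; exact: sumr_ge0.
  have hdiff : \sum_(k in K_star) (w ord0 k - wh ord0 k) <= delta / 2.
    apply: (@le_trans _ _ (\sum_(k in K_star) eps)).
      apply: ler_sum => k _; apply: le_trans (ltW hw).
      have := @en_coord R K (wh - w) k; rewrite mxE.
      rewrite mxE; apply: le_trans; rewrite distrC; exact: ler_norm.
    rewrite sumr_const.
    apply: (@le_trans _ _ (eps *+ K)).
      rewrite -[eps *+ #|K_star|]mulr_natr -[eps *+ K]mulr_natr.
      apply: ler_wpM2l; first exact: ltW.
      by rewrite ler_nat; have := max_card K_star; rewrite card_ord.
    rewrite -[eps *+ K]mulr_natr /eps le_eqVlt; apply/orP; left; apply/eqP; field.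
    by rewrite gt_eqF.
  have hsum : 1/2 < \sum_(k in K_star) wh ord0 k.
    rewrite sumrB in hdiff.
    have e1 : \sum_(k in K_star) wh ord0 k = \sum_(k in K_star) w ord0 k -
       (\sum_(k in K_star) w ord0 k - \sum_(k in K_star) wh ord0 k).
      by rewrite opprB addrC subrK.
    rewrite e1; apply: lt_le_trans (lerB hw1 hdiff).
    rewrite -addrA ltrDl subr_gt0 ltr_pdivrMr // ltr_pMr //.
    by rewrite ltr1n.
  rewrite /Cm /C_comb /=.
  apply: lt_le_trans hsum _.
  rewrite [X in _ <= X](bigID (fun k => k \in K_star)) /=.
  have -> : \sum_(i < K | i \in K_star) w_hat n om ord0 i * \1_(C i n om) y =
            \sum_(k in K_star) wh ord0 k.
    by apply: eq_bigr => k hk; rewrite indicE mem_set ?mulr1 //; exact: hC.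
  rewrite lerDl; apply: sumr_ge0 => k _; apply: mulr_ge0.
    exact: (simp n om).1.
  by rewrite indicE ler0n.
have h1 n : (1 <= PM (Cm n) + (PM (Un n) + P (Bn n)))%E.
  have PBT : PM (Bn n `*` [set: R]) = P (Bn n).
    rewrite /PM product_measure1E // [X in (_ * X)%E](_ : _ = 1%E) ?mule1 //; exact: probability_setT.
  have PT : PM setT = 1%E by exact: probability_setT.
  have mCm' : @measurable _ (T * measurableTypeR R)%type (Cm n) := mCm n.
  have mU' : @measurable _ (T * measurableTypeR R)%type (Un n) := mU n.
  have mBT : @measurable _ (T * measurableTypeR R)%type (Bn n `*` [set: R]).
    exact: measurableX.
  have mUB : @measurable _ (T * measurableTypeR R)%type (Un n `|` (Bn n `*` [set: R])).
    exact: measurableU.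
  rewrite -PBT -PT.
  apply: (@le_trans _ _ (PM (Cm n `|` (Un n `|` (Bn n `*` [set: R]))))).
    apply: le_measure; [by rewrite inE | rewrite inE; exact: measurableU | exact: incl].
  apply: le_trans (measureU2 _ mCm' mUB) _.
  by rewrite leeD2l // measureU2.
have PT0 : PM setT = 1%E by exact: probability_setT.
have fC n : PM (Cm n) \is a fin_num.
  have m' : @measurable _ (T * measurableTypeR R)%type (Cm n) := mCm n.
  rewrite ge0_fin_numE ?measure_ge0 //; apply: (@le_lt_trans _ _ 1%E); last exact: ltey.
  rewrite -PT0; apply: le_measure; [rewrite inE; exact: m' | by rewrite inE | by []].
have fU n : PM (Un n) \is a fin_num.
  have m' : @measurable _ (T * measurableTypeR R)%type (Un n) := mU n.
  rewrite ge0_fin_numE ?measure_ge0 //; apply: (@le_lt_trans _ _ 1%E); last exact: ltey.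
  rewrite -PT0; apply: le_measure; [rewrite inE; exact: m' | by rewrite inE | by []].
have fB n : P (Bn n) \is a fin_num by exact: fin_num_measure.
rewrite /limn_einf leeNr.
apply/lee_addgt0Pr => e e0.
have e20 : 0 < e / 2 by rewrite divr_gt0.
have hp : (fun n => P (Bn n)) @ \oo --> 0%E.
  have -> : (fun n => P (Bn n)) = (fun n => P [set om | eps <= `|dist_to W_star (w_hat n om)|]).
    apply/funext => n; congr (P _); apply/seteqP; split => om /=;
      by rewrite ger0_norm // (@dist_ge0 R K W_star Wne).
  exact: A2.
move/fine_cvgP: hp => [_ hp].
have V2 : \forall n \near \oo, fine (P (Bn n)) < e / 2.
  exact: (cvgr_lt 0 hp).
have : (limn_esup (fun n => PM (Un n)) < (alpha + e / 2)%:E)%E.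
  by apply: le_lt_trans hsup _; rewrite lte_fin ltrDl.
rewrite /limn_esup limf_esupE => /ereal_inf_lt [_ [V1 V1oo <-]] hV1.
rewrite limf_esupE.
apply: (@le_trans _ _ (ereal_sup [set (- PM (Cm n))%E | n in V1 `&` [set n | fine (P (Bn n)) < e / 2]])).
  apply: ereal_inf_lbound; exists (V1 `&` [set n | fine (P (Bn n)) < e / 2]) => //.
  exact: filterI.
apply: ge_ereal_sup => _ [n [hn1 hn2] <-].
have hu : (PM (Un n) < (alpha + e / 2)%:E)%E.
  by apply: le_lt_trans _ hV1; apply: ereal_sup_ubound; exists n.
have := h1 n.
rewrite -(fineK (fC n)) -(fineK (fU n)) -(fineK (fB n)) in hu *.
rewrite lte_fin in hu; rewrite /= in hn2.
rewrite -!EFinD -?EFinN -?EFinD ?lee_fin => hh.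
set pp := (X in (_ <= _ + (_ + X))) in hh.
have hp4 : pp < e / 2 := hn2.
move: hh hu hp4.
generalize (fine (PM (Cm n))) (fine (PM (Un n))) pp => c u p hh hu hp3.
clear -hh hu hp3; lra.
Qed.
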